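(* For $d\ge1$ let $X[n,d]=|\{i\in L_n(1):\ \deg_n(i)=d\}|$ be the number of vertices of degree $d$ in the first level of $T_n$. Then $X[n,1],X[n,2],\dots$ are asymptotically i.i.d. Poisson with mean $1$: for every $d\ge1$, the random vector $(X[n,1],\dots,X[n,d])$ converges in distribution, as $n\to\infty$, to a vector of $d$ independent Poisson random variables each with mean $1$.
   Context: Uniform random recursive tree: start at step $0$ with the tree $T_0$ consisting of the single vertex $0$ (the root). At step $n\ge1$, a vertex is chosen uniformly at random among the existing vertices $0,1,\dots,n-1$, independently of the past, and a new vertex $n$ is added and joined by an edge to the chosen vertex; $T_n$ is the resulting tree on vertices $0,\dots,n$. $\deg_n(i)$ is the degree of vertex $i$ in $T_n$, and $L_n(1)$ is the set of vertices of $T_n$ at graph distance $1$ from the root (the neighbours of $0$). *)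

(* Defs.v *)
From Stdlib Require Import Reals List Arith Bool.
Import ListNotations.
Open Scope R_scope.

(* A recursive tree T_n on vertices 0..n is encoded by its parent list
   t = [p_1; ...; p_n], where p_k < k is the vertex chosen at step k. *)
Definition parent (t : list nat) (k : nat) : nat := nth (k - 1) t 0%nat.

(* All recursive trees on n+1 vertices; each appears exactly once, and the
   uniform random recursive tree T_n is the uniform distribution on this list
   (each step chooses uniformly and independently among 0..k-1). *)
Fixpoint rrt (n : nat) : list (list nat) :=
  match n with
  | O => [[]]
  | S m => flat_map (fun t => map (fun p => t ++ [p]) (seq 0 (S m))) (rrt m)
  end.

Definition children_count (t : list nat) (i : nat) : nat :=
  length (filter (fun k => Nat.eqb (parent t k) i) (seq 1 (length t))).

Definition deg (t : list nat) (i : nat) : nat :=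
  ((if Nat.eqb i 0 then 0 else 1) + children_count t i)%nat.

Definition in_level1 (t : list nat) (i : nat) : bool :=
  Nat.leb 1 i && Nat.leb i (length t) && Nat.eqb (parent t i) 0.

Definition Xlev (t : list nat) (d : nat) : nat :=
  length (filter (fun i => in_level1 t i && Nat.eqb (deg t i) d)
                 (seq 0 (S (length t)))).

Definition prob (n : nat) (E : list nat -> bool) : R :=
  INR (length (filter E (rrt n))) / INR (length (rrt n)).

Definition poisson1_cdf (k : nat) : R :=
  sum_f_R0 (fun j => exp (-1) / INR (fact j)) k.

(* Main.v *)
Require Import Defs.
From Stdlib Require Import Reals List Arith Bool Lia Lra.
Import ListNotations.
Local Open Scope nat_scope.


Fixpoint lsum {A} (l : list A) (h : A -> nat) : nat :=
  match l with [] => 0%nat | x :: l' => (h x + lsum l' h)%nat end.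

Lemma lsum_app {A} (l1 l2 : list A) h : lsum (l1 ++ l2) h = (lsum l1 h + lsum l2 h)%nat.
Proof. induction l1; simpl; lia. Qed.

Lemma lsum_ext {A} (l : list A) h1 h2 : (forall x, In x l -> h1 x = h2 x) -> lsum l h1 = lsum l h2.
Proof. induction l; simpl; intros H; [reflexivity|]. f_equal; auto. Qed.

Lemma lsum_plus {A} (l : list A) h1 h2 : lsum l (fun x => h1 x + h2 x)%nat = (lsum l h1 + lsum l h2)%nat.
Proof. induction l; simpl; lia. Qed.

Lemma lsum_mult {A} (l : list A) h c : lsum l (fun x => c * h x)%nat = (c * lsum l h)%nat.
Proof. induction l; simpl; nia. Qed.

Lemma lsum_swap {A B} (l1 : list A) (l2 : list B) (h : A -> B -> nat) :
  lsum l1 (fun x => lsum l2 (h x)) = lsum l2 (fun y => lsum l1 (fun x => h x y)).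
Proof. induction l1; simpl. induction l2; simpl; lia.
  rewrite IHl1, <- lsum_plus. reflexivity. Qed.

Lemma lsum_flat_map {A B} (l : list A) (f : A -> list B) h :
  lsum (flat_map f l) h = lsum l (fun x => lsum (f x) h).
Proof. induction l; simpl; auto. rewrite lsum_app, IHl; auto. Qed.

Lemma lsum_map {A B} (l : list A) (f : A -> B) h : lsum (map f l) h = lsum l (fun x => h (f x)).
Proof. induction l; simpl; auto. Qed.

Lemma length_filter_lsum {A} (l : list A) P : length (filter P l) = lsum l (fun x => if P x then 1 else 0)%nat.
Proof. induction l; simpl; auto. destruct (P a); simpl; lia. Qed.

Lemma rrt_spec m t : In t (rrt m) -> length t = m /\ (forall x, In x t -> x < m).
Proof.
  revert t; induction m; simpl; intros t H.
  - destruct H as [H|[]]; subst; simpl; split; auto; intros x [].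
  - apply in_flat_map in H as [t0 [H0 H1]]. change (In t (map (fun p => t0 ++ [p]) (seq 0 (S m)))) in H1. apply in_map_iff in H1 as [p [Hp Hin]]. subst.
    apply IHm in H0 as [L B]. apply in_seq in Hin.
    rewrite length_app; simpl; split; [lia|].
    intros x Hx. apply in_app_or in Hx as [Hx|[Hx|[]]]. apply B in Hx; lia. lia.
Qed.

Lemma lsum_const {A} (l : list A) c : lsum l (fun _ => c) = (c * length l)%nat.
Proof. induction l; simpl; lia. Qed.

Lemma rrt_length m : length (rrt m) = fact m.
Proof.
  induction m. reflexivity. cbn [rrt]. rewrite length_flat_map.
  rewrite (map_ext _ (fun _ => S m)).
  2:{ intros; rewrite length_map, length_seq; reflexivity. }
  transitivity (S m * length (rrt m)).
  - clear IHm. induction (rrt m); simpl; auto. rewrite IHl. lia.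
  - rewrite IHm. simpl. lia.
Qed.

Lemma parent_app_old t p k : 1 <= k <= length t -> parent (t ++ [p]) k = parent t k.
Proof. intros H. unfold parent. rewrite app_nth1 by lia. reflexivity. Qed.

Lemma parent_app_new t p : parent (t ++ [p]) (S (length t)) = p.
Proof. unfold parent. rewrite app_nth2 by lia. replace (S (length t) - 1 - length t) with 0 by lia. reflexivity. Qed.

Lemma seq_S1 a n : seq a (S n) = seq a n ++ [a + n].
Proof. rewrite seq_S. reflexivity. Qed.

Lemma cc_app t p i : children_count (t ++ [p]) i = children_count t i + (if p =? i then 1 else 0).
Proof.
  unfold children_count. rewrite length_app. simpl (length [p]). rewrite Nat.add_1_r, seq_S1, filter_app, length_app.
  f_equal.
  - f_equal. apply filter_ext_in. intros k Hk. apply in_seq in Hk. rewrite parent_app_old by lia. reflexivity.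
  - replace (1 + length t) with (S (length t)) by lia. simpl. rewrite parent_app_new. destruct (p =? i); reflexivity.
Qed.

Lemma lv_app_old t p i : i <= length t -> in_level1 (t ++ [p]) i = in_level1 t i.
Proof.
  intros H. unfold in_level1. rewrite length_app. simpl length.
  destruct (Nat.leb_spec 1 i); simpl; auto.
  rewrite parent_app_old by lia.
  replace (i <=? length t + 1) with true by (symmetry; apply Nat.leb_le; lia).
  replace (i <=? length t) with true by (symmetry; apply Nat.leb_le; lia). reflexivity.
Qed.

Lemma lv_app_new t p : in_level1 (t ++ [p]) (S (length t)) = (p =? 0).
Proof.
  unfold in_level1. rewrite length_app, parent_app_new. simpl length.
  replace (S (length t) <=? length t + 1) with true by (symmetry; apply Nat.leb_le; lia). reflexivity.
Qed.

Lemma deg_app_old t p i : deg (t ++ [p]) i = deg t i + (if p =? i then 1 else 0).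
Proof. unfold deg. rewrite cc_app. lia. Qed.

Lemma cc_new t p : (forall x, In x t -> x < S (length t)) -> p < S (length t) ->
  children_count (t ++ [p]) (S (length t)) = 0.
Proof.
  intros Ht Hp. rewrite cc_app. unfold children_count.
  replace (p =? S (length t)) with false by (symmetry; apply Nat.eqb_neq; lia).
  rewrite Nat.add_0_r.
  rewrite length_filter_lsum, (lsum_ext _ _ (fun _ => 0)), lsum_const; [lia|].
  intros k Hk. apply in_seq in Hk. unfold parent.
  assert (In (nth (k-1) t 0) t) by (apply nth_In; lia).
  specialize (Ht _ H). destruct (Nat.eqb_spec (nth (k - 1) t 0) (S (length t))); [lia|reflexivity].
Qed.

Lemma deg_new t p : (forall x, In x t -> x < S (length t)) -> p < S (length t) ->
  deg (t ++ [p]) (S (length t)) = 1.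
Proof. intros. unfold deg. rewrite cc_new; auto. Qed.

Definition cnt_eq (p : nat) (Q : nat -> bool) (l : list nat) : nat :=
  length (filter (fun i => (i =? p) && Q i) l).

Lemma count_swap (l : list nat) (P P' : nat -> bool) p :
  (forall i, In i l -> i <> p -> P' i = P i) ->
  length (filter P' l) + cnt_eq p P l = length (filter P l) + cnt_eq p P' l.
Proof.
  unfold cnt_eq. induction l as [|a l IH]; simpl; intros H; auto.
  destruct (Nat.eqb_spec a p).
  - subst. simpl. specialize (IH (fun i Hi => H i (or_intror Hi))).
    destruct (P p), (P' p); simpl; lia.
  - simpl. rewrite H by auto. specialize (IH (fun i Hi => H i (or_intror Hi))).
    destruct (P a); simpl; lia.
Qed.

Lemma cnt_eq_seq p Q n a : a <= p < a + n -> cnt_eq p Q (seq a n) = if Q p then 1 else 0.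
Proof.
  unfold cnt_eq. revert a; induction n; intros a H; [lia|]. simpl.
  destruct (Nat.eqb_spec a p).
  - subst. simpl. assert (length (filter (fun i => (i =? p) && Q i) (seq (S p) n)) = 0).
    { rewrite length_filter_lsum, (lsum_ext _ _ (fun _ => 0)), lsum_const; [lia|].
      intros x Hx. apply in_seq in Hx. destruct (Nat.eqb_spec x p); [lia|reflexivity]. }
    destruct (Q p); simpl; lia.
  - simpl. apply IHn. lia.
Qed.

Lemma Xlev_app t p j : (forall x, In x t -> x < S (length t)) -> p <= length t ->
  Xlev (t ++ [p]) j + (if in_level1 t p && (deg t p =? j) then 1 else 0)
  = Xlev t j + (if (p =? 0) && (j =? 1) then 1 else 0)
    + (if in_level1 t p && (S (deg t p) =? j) then 1 else 0).
Proof.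
  intros Ht Hp. unfold Xlev. rewrite length_app. simpl (length [p]).
  replace (S (length t + 1)) with (S (S (length t))) by lia.
  rewrite (seq_S1 0 (S (length t))), filter_app, length_app. simpl (0 + S (length t)).
  assert (E1 : length (filter (fun i => in_level1 (t ++ [p]) i && (deg (t ++ [p]) i =? j)) [S (length t)])
     = if (p =? 0) && (j =? 1) then 1 else 0).
  { cbn [filter]. rewrite lv_app_new, deg_new by (auto; lia). rewrite (Nat.eqb_sym 1 j).
    destruct ((p =? 0) && (j =? 1)); reflexivity. }
  rewrite E1.
  rewrite (filter_ext_in _ (fun i => in_level1 t i && (deg t i + (if p =? i then 1 else 0) =? j))).
  2:{ intros i Hi. apply in_seq in Hi. rewrite lv_app_old by lia. rewrite deg_app_old. reflexivity. }
  pose proof (count_swap (seq 0 (S (length t))) (fun i => in_level1 t i && (deg t i =? j))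
     (fun i => in_level1 t i && (deg t i + (if p =? i then 1 else 0) =? j)) p) as CS.
  rewrite !cnt_eq_seq in CS by lia.
  assert (HH : forall i, In i (seq 0 (S (length t))) -> i <> p ->
     in_level1 t i && (deg t i + (if p =? i then 1 else 0) =? j) = in_level1 t i && (deg t i =? j)).
  { intros i _ Hi. replace (p =? i) with false by (symmetry; apply Nat.eqb_neq; auto). rewrite Nat.add_0_r. reflexivity. }
  specialize (CS HH). rewrite Nat.eqb_refl in CS. rewrite Nat.add_1_r in CS.
  destruct (in_level1 t p && (deg t p =? j)), (in_level1 t p && (S (deg t p) =? j)),
    ((p =? 0) && (j =? 1)); simpl in *; lia.
Qed.

Fixpoint lprod {A} (l : list A) (h : A -> nat) : nat :=
  match l with [] => 1 | x :: l' => h x * lprod l' h end.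

Lemma lprod_ext {A} (l : list A) h1 h2 : (forall x, In x l -> h1 x = h2 x) -> lprod l h1 = lprod l h2.
Proof. induction l; simpl; intros H; [reflexivity|]. f_equal; auto. Qed.

Definition upd (f : nat -> nat) (i v : nat) : nat -> nat := fun j => if j =? i then v else f j.

Lemma upd_neq h i v j : j <> i -> upd h i v j = h j.
Proof. intros H. unfold upd. apply Nat.eqb_neq in H. rewrite H. reflexivity. Qed.
Lemma upd_eq h i v : upd h i v i = v.
Proof. unfold upd. rewrite Nat.eqb_refl. reflexivity. Qed.

Lemma lprod_factor (l : list nat) h i : NoDup l -> In i l -> lprod l h = h i * lprod l (upd h i 1).
Proof.
  induction l as [|a l IH]; simpl; intros ND Hi; [destruct Hi|]. inversion ND; subst.
  destruct Hi as [Hi|Hi]; [subst a|].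
  - unfold upd. rewrite Nat.eqb_refl. rewrite Nat.mul_1_l. f_equal.
    apply lprod_ext. intros x Hx. destruct (Nat.eqb_spec x i); [subst; tauto|auto].
  - rewrite (IH H2 Hi). unfold upd. destruct (Nat.eqb_spec a i); [subst; tauto|]. lia.
Qed.

Lemma lsum_factor (l : list nat) h i : NoDup l -> In i l -> lsum l h = h i + lsum l (upd h i 0).
Proof.
  induction l as [|a l IH]; simpl; intros ND Hi; [destruct Hi|]. inversion ND; subst.
  destruct Hi as [Hi|Hi]; [subst a|].
  - unfold upd. rewrite Nat.eqb_refl. f_equal.
    apply lsum_ext. intros x Hx. destruct (Nat.eqb_spec x i); [subst; tauto|auto].
  - rewrite (IH H2 Hi). unfold upd. destruct (Nat.eqb_spec a i); [subst; tauto|]. lia.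
Qed.

Fixpoint ff (x r : nat) : nat := match r with 0 => 1 | S r' => x * ff (x - 1) r' end.

Definition FF (D : nat) (r x : nat -> nat) : nat := lprod (seq 1 D) (fun j => ff (x j) (r j)).

Lemma FF_ext D r1 r2 x1 x2 : (forall j, 1 <= j <= D -> r1 j = r2 j /\ x1 j = x2 j) -> FF D r1 x1 = FF D r2 x2.
Proof. intros H. apply lprod_ext. intros j Hj. apply in_seq in Hj. destruct (H j) as [-> ->]; auto; lia. Qed.

Definition XV (t : list nat) : nat -> nat := fun j => Xlev t j.
Definition move (q : nat) (x : nat -> nat) : nat -> nat := upd (upd x q (x q - 1)) (S q) (S (x (S q))).

Lemma lsum_seq_ind (g : nat -> nat) q n a :
  lsum (seq a n) (fun j => if j =? q then g j else 0) = if (a <=? q) && (q <? a + n) then g q else 0.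
Proof.
  revert a; induction n; intros a; simpl.
  - destruct (Nat.leb_spec a q), (Nat.ltb_spec q (a+0)); simpl; auto; lia.
  - rewrite IHn. destruct (Nat.eqb_spec a q).
    + subst. rewrite Nat.leb_refl. replace (q <? q + S n) with true by (symmetry; apply Nat.ltb_lt; lia).
      replace (S q <=? q) with false by (symmetry; apply Nat.leb_gt; lia). simpl. lia.
    + destruct (Nat.leb_spec (S a) q), (Nat.leb_spec a q), (Nat.ltb_spec q (S a + n)), (Nat.ltb_spec q (a + S n));
      simpl; lia.
Qed.

Definition cnt (l : list nat) (key : nat -> nat) (j : nat) : nat := length (filter (fun p => key p =? j) l).

Lemma group (l : list nat) (key G : nat -> nat) D B : (forall j, ~ (1 <= j <= D) -> G j = B) ->
  exists c, c + lsum (seq 1 D) (cnt l key) = length l /\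
  lsum l (fun p => G (key p)) = lsum (seq 1 D) (fun j => cnt l key j * G j) + c * B.
Proof.
  intros HG. induction l as [|p l IH].
  - exists 0. simpl. unfold cnt. simpl. rewrite lsum_const. lia.
  - destruct IH as [c [H1 H2]].
    assert (E : forall h : nat -> nat, lsum (seq 1 D) (fun j => cnt (p :: l) key j * h j)
        = lsum (seq 1 D) (fun j => cnt l key j * h j) + lsum (seq 1 D) (fun j => if j =? key p then h j else 0)).
    { intros h. rewrite <- lsum_plus. apply lsum_ext. intros j _. unfold cnt. simpl.
      rewrite (Nat.eqb_sym (key p) j). destruct (j =? key p); simpl; lia. }
    pose proof (E (fun _ => 1)) as E1. rewrite lsum_seq_ind in E1.
    rewrite (lsum_ext _ (fun j => cnt (p :: l) key j * 1) (cnt (p :: l) key)) in E1 by (intros; lia).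
    rewrite (lsum_ext _ (fun j => cnt l key j * 1) (cnt l key)) in E1 by (intros; lia).
    rewrite E, lsum_seq_ind. change (length (p :: l)) with (S (length l)). cbn [lsum].
    destruct (Nat.leb_spec 1 (key p)), (Nat.ltb_spec (key p) (1 + D)); cbn [andb] in *.
    + exists c. split; lia.
    + exists (S c). rewrite HG by lia. split; lia.
    + exists (S c). rewrite HG by lia. split; lia.
    + exists (S c). rewrite HG by lia. split; lia.
Qed.

Lemma XV_app0 t j : (forall x, In x t -> x < S (length t)) -> 1 <= j ->
  XV (t ++ [0]) j = upd (XV t) 1 (S (XV t 1)) j.
Proof.
  intros Ht Hj. pose proof (Xlev_app t 0 j Ht ltac:(lia)) as E.
  unfold in_level1 in E. simpl in E. unfold XV, upd.
  destruct (Nat.eqb_spec j 1); subst; simpl in E; lia.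
Qed.

Lemma lv_deg t p : in_level1 t p = true -> 1 <= deg t p.
Proof. unfold in_level1, deg. intros H. destruct p; simpl in *; [discriminate|lia]. Qed.

Lemma XV_appp t p j : (forall x, In x t -> x < S (length t)) -> 1 <= p <= length t -> 1 <= j ->
  XV (t ++ [p]) j = (if in_level1 t p then move (deg t p) (XV t) else XV t) j.
Proof.
  intros Ht Hp Hj. pose proof (Xlev_app t p j Ht ltac:(lia)) as E.
  replace (p =? 0) with false in E by (symmetry; apply Nat.eqb_neq; lia). cbn [andb] in E.
  unfold XV. destruct (in_level1 t p) eqn:L; cbn [andb] in E.
  - pose proof (lv_deg _ _ L). unfold move, upd.
    destruct (Nat.eqb_spec j (S (deg t p))), (Nat.eqb_spec j (deg t p)),
      (Nat.eqb_spec (deg t p) j), (Nat.eqb_spec (S (deg t p)) j); cbv beta iota in E |- *; try subst j; try lia.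
  - lia.
Qed.

Definition key (t : list nat) (p : nat) : nat := if in_level1 t p then deg t p else 0.

Lemma cnt_key t j : 1 <= j -> cnt (seq 1 (length t)) (key t) j = XV t j.
Proof.
  intros Hj. unfold cnt, XV, Xlev. simpl (seq 0 _). cbn [filter].
  replace (in_level1 t 0) with false by reflexivity. simpl andb. cbv iota.
  apply f_equal, filter_ext. intros p. unfold key. destruct (in_level1 t p); [reflexivity|].
  cbn [andb]. apply Nat.eqb_neq. lia.
Qed.

Lemma chain D r t m : In t (rrt m) -> exists c, c + lsum (seq 1 D) (XV t) = m /\
  lsum (seq 0 (S m)) (fun p => FF D r (XV (t ++ [p])))
  = FF D r (upd (XV t) 1 (S (XV t 1))) + lsum (seq 1 D) (fun j => XV t j * FF D r (move j (XV t)))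
    + c * FF D r (XV t).
Proof.
  intros Hin. destruct (rrt_spec _ _ Hin) as [Lt Bt].
  assert (Ht : forall x, In x t -> x < S (length t)) by (intros x Hx; specialize (Bt x Hx); lia).
  set (X := XV t).
  set (G := fun j => if (1 <=? j) && (j <=? D) then FF D r (move j X) else FF D r X).
  destruct (group (seq 1 m) (key t) G D (FF D r X)) as [c [H1 H2]].
  { intros j Hj. unfold G. destruct (Nat.leb_spec 1 j), (Nat.leb_spec j D); simpl; auto; lia. }
  exists c. rewrite length_seq in H1.
  rewrite (lsum_ext _ (cnt (seq 1 m) (key t)) X) in H1.
  2:{ intros j Hj. apply in_seq in Hj. subst m. apply cnt_key. lia. }
  split; [exact H1|].
  simpl (seq 0 (S m)). cbn [lsum].
  rewrite (FF_ext D r r (XV (t ++ [0])) (upd X 1 (S (X 1)))).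
  2:{ intros j Hj. split; auto. apply XV_app0; auto; lia. }
  rewrite (lsum_ext _ _ (fun p => G (key t p))).
  2:{ intros p Hp. apply in_seq in Hp.
      rewrite (FF_ext D r r _ (if in_level1 t p then move (deg t p) X else X)).
      2:{ intros j Hj. split; auto. apply XV_appp; auto; lia. }
      unfold G, key. destruct (in_level1 t p) eqn:L.
      - pose proof (lv_deg _ _ L). destruct (Nat.leb_spec 1 (deg t p)); [|lia].
        destruct (Nat.leb_spec (deg t p) D); simpl; auto.
        apply FF_ext. intros j Hj. split; auto. unfold move, upd.
        destruct (Nat.eqb_spec j (S (deg t p))), (Nat.eqb_spec j (deg t p)); auto; lia.
      - reflexivity. }
  rewrite H2.
  rewrite (lsum_ext _ (fun j => cnt (seq 1 m) (key t) j * G j) (fun j => X j * FF D r (move j X))).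
  2:{ intros j Hj. apply in_seq in Hj. subst m. rewrite cnt_key by lia. unfold G.
      destruct (Nat.leb_spec 1 j), (Nat.leb_spec j D); simpl; auto; lia. }
  lia.
Qed.

Lemma ff_zero x r : x < r -> ff x r = 0.
Proof. revert x; induction r; intros x H; [lia|]. simpl. destruct x; [lia|]. rewrite IHr by lia. lia. Qed.

Lemma ff_Sr x r : ff x (S r) = ff x r * (x - r).
Proof.
  revert x; induction r; intros x; simpl. lia.
  change (x * ff (x - 1) (S r) = x * ff (x - 1) r * (x - S r)). rewrite IHr. 
  replace (x - 1 - r) with (x - S r) by lia. lia.
Qed.

Lemma ff_Sx y s : ff (S y) s = ff y s + s * ff y (s - 1).
Proof.
  destruct s as [|s]; simpl. lia.
  change (S y * ff (y - 0) s = y * ff (y - 1) s + S s * ff y (s - 0)).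
  rewrite !Nat.sub_0_r. change (y * ff (y - 1) s) with (ff y (S s)). rewrite ff_Sr.
  destruct (Nat.le_gt_cases s y). replace (S y) with ((y - s) + S s) at 1 by lia. set (u := y - s). ring. rewrite ff_zero by lia. lia.
Qed.

Lemma ff_xmul x r : x * ff x r = ff x (S r) + r * ff x r.
Proof. rewrite ff_Sr. destruct (Nat.le_gt_cases r x). nia. rewrite ff_zero by lia. lia. Qed.

Lemma ff_pred x r : x * ff (x - 1) r = ff x (S r).
Proof. reflexivity. Qed.

Definition hF (r x : nat -> nat) : nat -> nat := fun j => ff (x j) (r j).

Lemma NoDup_seq1 D : NoDup (seq 1 D).
Proof. apply seq_NoDup. Qed.

Lemma FF_split1 D r x i : 1 <= i <= D ->
  FF D r x = ff (x i) (r i) * lprod (seq 1 D) (upd (hF r x) i 1).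
Proof. intros H. unfold FF. apply (lprod_factor _ (hF r x)). apply seq_NoDup. apply in_seq. lia. Qed.

Lemma FF_split2 D r x i : 1 <= i -> S i <= D ->
  FF D r x = ff (x i) (r i) * ff (x (S i)) (r (S i)) * lprod (seq 1 D) (upd (upd (hF r x) i 1) (S i) 1).
Proof.
  intros H1 H2. rewrite (FF_split1 D r x i) by lia.
  rewrite (lprod_factor _ (upd (hF r x) i 1) (S i)) by (apply seq_NoDup || (apply in_seq; lia)).
  rewrite upd_neq by lia. unfold hF. lia.
Qed.

Lemma rest_ext1 D h h' i : (forall j, j <= D -> j <> i -> h j = h' j) ->
  lprod (seq 1 D) (upd h i 1) = lprod (seq 1 D) (upd h' i 1).
Proof. intros H. apply lprod_ext. intros j Hj. apply in_seq in Hj. unfold upd. destruct (Nat.eqb_spec j i); auto; apply H; lia. Qed.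

Lemma rest_ext2 D h h' i : (forall j, j <> i -> j <> S i -> h j = h' j) ->
  lprod (seq 1 D) (upd (upd h i 1) (S i) 1) = lprod (seq 1 D) (upd (upd h' i 1) (S i) 1).
Proof. intros H. apply lprod_ext. intros j _. unfold upd. destruct (Nat.eqb_spec j (S i)), (Nat.eqb_spec j i); auto. Qed.

Definition rm1 (r : nat -> nat) : nat -> nat := upd r 1 (r 1 - 1).
Definition mvr (j : nat) (r : nat -> nat) : nat -> nat := upd (upd r j (S (r j))) (S j) (r (S j) - 1).

Lemma idA D r x : 1 <= D ->
  FF D r (upd x 1 (S (x 1))) = FF D r x + r 1 * FF D (rm1 r) x.
Proof.
  intros HD. rewrite !(FF_split1 D _ _ 1) by lia.
  rewrite (rest_ext1 D (hF r (upd x 1 (S (x 1)))) (hF r x)) by (intros j _ Hj; unfold hF, upd; apply Nat.eqb_neq in Hj; rewrite Hj; auto).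
  rewrite (rest_ext1 D (hF (rm1 r) x) (hF r x)) by (intros j _ Hj; unfold hF, rm1, upd; apply Nat.eqb_neq in Hj; rewrite Hj; auto).
  unfold rm1, upd. rewrite Nat.eqb_refl. rewrite ff_Sx. nia.
Qed.

Lemma idB D r x j : 1 <= j -> S j <= D ->
  x j * FF D r (move j x) + r j * FF D r x = x j * FF D r x + r (S j) * FF D (mvr j r) x.
Proof.
  intros H1 H2. rewrite !(FF_split2 D _ _ j) by lia.
  set (Rst := lprod (seq 1 D) (upd (upd (hF r x) j 1) (S j) 1)).
  rewrite (rest_ext2 D (hF r (move j x)) (hF r x)) by
    (intros i Hi Hi'; unfold hF, move, upd; apply Nat.eqb_neq in Hi; apply Nat.eqb_neq in Hi'; rewrite Hi, Hi'; auto).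
  rewrite (rest_ext2 D (hF (mvr j r) x) (hF r x)) by
    (intros i Hi Hi'; unfold hF, mvr, upd; apply Nat.eqb_neq in Hi; apply Nat.eqb_neq in Hi'; rewrite Hi, Hi'; auto).
  fold Rst. unfold move, mvr, upd. rewrite !Nat.eqb_refl.
  replace (j =? S j) with false by (symmetry; apply Nat.eqb_neq; lia).
  rewrite ff_Sx.
  assert (E1 := ff_pred (x j) (r j)). assert (E2 := ff_xmul (x j) (r j)).
  set (A1 := ff (x j) (S (r j))) in *. set (a := ff (x j - 1) (r j)) in *.
  set (fa := ff (x j) (r j)) in *. set (fb := ff (x (S j)) (r (S j))).
  set (fb' := ff (x (S j)) (r (S j) - 1)).
  replace (x j * (a * (fb + r (S j) * fb') * Rst)) with ((x j * a) * (fb + r (S j) * fb') * Rst) by ring.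
  rewrite E1. replace (x j * (fa * fb * Rst)) with ((x j * fa) * fb * Rst) by ring. rewrite E2. ring.
Qed.

Lemma idC D r x : 1 <= D ->
  x D * FF D r (move D x) + r D * FF D r x = x D * FF D r x.
Proof.
  intros HD. rewrite !(FF_split1 D _ _ D) by lia.
  rewrite (rest_ext1 D (hF r (move D x)) (hF r x)) by
    (intros i Hi1 Hi; unfold hF, move, upd; apply Nat.eqb_neq in Hi; rewrite Hi;
     destruct (Nat.eqb_spec i (S D)); auto; lia).
  unfold move. rewrite upd_neq, upd_eq by lia.
  assert (E1 := ff_pred (x D) (r D)). assert (E2 := ff_xmul (x D) (r D)).
  set (Rst := lprod (seq 1 D) (upd (hF r x) D 1)).
  replace (x D * (ff (x D - 1) (r D) * Rst)) with ((x D * ff (x D - 1) (r D)) * Rst) by ring.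
  rewrite E1. replace (x D * (ff (x D) (r D) * Rst)) with ((x D * ff (x D) (r D)) * Rst) by ring. rewrite E2. ring.
Qed.

Definition nr (D : nat) (r : nat -> nat) : nat := lsum (seq 1 D) r.

Lemma lsum_mult_r {A} (l : list A) h c : lsum l (fun x => h x * c) = lsum l h * c.
Proof. induction l; simpl; nia. Qed.

Lemma tree_id D r t m : 1 <= D -> In t (rrt m) ->
  lsum (seq 0 (S m)) (fun p => FF D r (XV (t ++ [p]))) + nr D r * FF D r (XV t)
  = S m * FF D r (XV t) + r 1 * FF D (rm1 r) (XV t)
    + lsum (seq 1 (D - 1)) (fun j => r (S j) * FF D (mvr j r) (XV t)).
Proof.
  intros HD Hin. destruct (chain D r t m Hin) as [c [H1 H2]]. rewrite H2, idA by lia.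
  set (X := XV t) in *.
  assert (K : lsum (seq 1 D) (fun j => X j * FF D r (move j X) + r j * FF D r X)
    = lsum (seq 1 D) (fun j => X j * FF D r X) + lsum (seq 1 (D - 1)) (fun j => r (S j) * FF D (mvr j r) X)).
  { assert (Hs : seq 1 D = seq 1 (D - 1) ++ [D]).
    { replace D with (S (D - 1)) at 1 by lia. rewrite seq_S1. do 2 f_equal. lia. }
    rewrite Hs, !lsum_app.
    rewrite (lsum_ext (seq 1 (D - 1)) _ (fun j => X j * FF D r X + r (S j) * FF D (mvr j r) X)).
    2:{ intros j Hj. apply in_seq in Hj. apply idB; lia. }
    rewrite lsum_plus. simpl. replace (S (D - 1)) with D by lia. rewrite <- (idC D r X HD). lia. }
  rewrite lsum_plus in K. unfold nr. rewrite <- lsum_mult_r.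
  rewrite (lsum_mult_r (seq 1 D) X) in K. rewrite <- H1. nia.
Qed.

Definition SS (D : nat) (r : nat -> nat) (m : nat) : nat := lsum (rrt m) (fun t => FF D r (XV t)).

Lemma SS_rec D r m : 1 <= D ->
  SS D r (S m) + nr D r * SS D r m
  = S m * SS D r m + r 1 * SS D (rm1 r) m + lsum (seq 1 (D - 1)) (fun j => r (S j) * SS D (mvr j r) m).
Proof.
  intros HD. unfold SS. cbn [rrt]. rewrite lsum_flat_map.
  rewrite (lsum_ext _ _ (fun t => lsum (seq 0 (S m)) (fun p => FF D r (XV (t ++ [p]))))).  
  2:{ intros t _. rewrite lsum_map. reflexivity. }
  rewrite <- !lsum_mult, <- lsum_plus.
  rewrite (lsum_ext _ _ (fun t => S m * FF D r (XV t) + r 1 * FF D (rm1 r) (XV t)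
    + lsum (seq 1 (D - 1)) (fun j => r (S j) * FF D (mvr j r) (XV t)))).
  2:{ intros t Ht. apply tree_id; auto. }
  rewrite !lsum_plus. f_equal.
  rewrite lsum_swap. apply lsum_ext. intros j _. rewrite lsum_mult. reflexivity.
Qed.

Open Scope R_scope.

Lemma lim_rec (a b : nat -> R) (k : nat) : (1 <= k)%nat ->
  (forall m, a (S m) = a m * (1 - INR k / INR (S m)) + b m / INR (S m)) ->
  Un_cv b (INR k) -> Un_cv a 1.
Proof.
  intros Hk Hrec Hb eps Heps.
  set (K := INR k). assert (HK : 1 <= K) by (apply (le_INR 1); lia).
  destruct (Hb (eps / 2)) as [N1 HN1]; [lra|].
  set (M := Nat.max N1 k).
  set (g := fun m => INR m * Rabs (a m - 1)).
  assert (Hg : forall m, (M <= m)%nat -> g (S m) <= g m + eps / 2).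
  { intros m Hm. unfold g. rewrite Hrec.
    assert (HSm : 0 < INR (S m)) by (apply lt_0_INR; lia).
    assert (E : a m * (1 - K / INR (S m)) + b m / INR (S m) - 1
              = ((a m - 1) * (INR (S m) - K) + (b m - K)) / INR (S m)) by (field; lra).
    fold K. rewrite E. unfold Rdiv. rewrite Rabs_mult, Rabs_inv, (Rabs_right (INR (S m))) by lra.
    replace (INR (S m) * (Rabs ((a m - 1) * (INR (S m) - K) + (b m - K)) * / INR (S m)))
      with (Rabs ((a m - 1) * (INR (S m) - K) + (b m - K))) by (field; lra).
    eapply Rle_trans; [apply Rabs_triang|]. rewrite Rabs_mult.
    assert (H1 : K <= INR (S m)) by (apply le_INR; lia).
    rewrite (Rabs_right (INR (S m) - K)) by lra.
    assert (H2 : Rabs (b m - K) < eps / 2) by (apply HN1; lia).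
    rewrite S_INR in *.
    assert (Rabs (a m - 1) * (INR m + 1 - K) <= Rabs (a m - 1) * INR m).
    { apply Rmult_le_compat_l; [apply Rabs_pos|lra]. }
    lra. }
  assert (Hg2 : forall n, g (n + M)%nat <= g M + INR n * (eps / 2)).
  { induction n. simpl. lra. replace (S n + M)%nat with (S (n + M)) by lia.
    eapply Rle_trans; [apply Hg; lia|]. rewrite S_INR. lra. }
  assert (HgM : 0 <= g M) by (unfold g; apply Rmult_le_pos; [apply pos_INR|apply Rabs_pos]).
  destruct (archimed_cor1 (eps / 2 / (g M + 1))) as [N2 [HN2 HN2']].
  { apply Rdiv_lt_0_compat; lra. }
  exists (Nat.max (S M) N2). intros n Hn. unfold Rdist.
  specialize (Hg2 (n - M)%nat). replace (n - M + M)%nat with n in Hg2 by lia.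
  unfold g in Hg2.
  assert (Hn0 : 0 < INR n) by (apply lt_0_INR; lia).
  assert (HnM : INR (n - M) <= INR n) by (apply le_INR; lia).
  assert (HN2n : INR N2 <= INR n) by (apply le_INR; lia).
  assert (HN20 : 0 < INR N2) by (apply lt_0_INR; lia).
  assert (Hq : g M < INR n * (eps / 2)).
  { apply Rmult_lt_compat_r with (r := INR N2) in HN2; [|lra].
    rewrite Rinv_l in HN2 by lra.
    assert (1 < eps / 2 / (g M + 1) * INR n) by (eapply Rlt_le_trans; [exact HN2|]; apply Rmult_le_compat_l; [apply Rlt_le, Rdiv_lt_0_compat; lra | lra]).
    unfold Rdiv in H. 
    apply Rmult_lt_compat_r with (r := g M + 1) in H; [|lra].
    replace (eps * / 2 * / (g M + 1) * INR n * (g M + 1)) with (INR n * (eps / 2)) in H by (field; lra). lra. }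
  assert (INR (n - M) * (eps / 2) <= INR n * (eps / 2)) by (apply Rmult_le_compat_r; lra).
  unfold g in Hq.
  assert (Hf : INR n * Rabs (a n - 1) < INR n * eps) by lra.
  apply Rmult_lt_reg_l in Hf; lra.
Qed.


Fixpoint Rlsum {A} (l : list A) (h : A -> R) : R :=
  match l with [] => 0 | x :: l' => h x + Rlsum l' h end.

Lemma INR_lsum {A} (l : list A) h : INR (lsum l h) = Rlsum l (fun x => INR (h x)).
Proof. induction l; simpl; auto. rewrite plus_INR, IHl. reflexivity. Qed.

Lemma Rlsum_ext {A} (l : list A) h1 h2 : (forall x, In x l -> h1 x = h2 x) -> Rlsum l h1 = Rlsum l h2.
Proof. induction l; simpl; intros H; [reflexivity|]. rewrite H, IHl; auto. Qed.

Lemma Rlsum_le {A} (l : list A) h1 h2 : (forall x, In x l -> h1 x <= h2 x) -> Rlsum l h1 <= Rlsum l h2.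
Proof. induction l; simpl; intros H; [lra|]. assert (h1 a <= h2 a) by (apply H; left; auto). assert (Rlsum l h1 <= Rlsum l h2) by (apply IHl; intros; apply H; right; auto). lra. Qed.

Lemma Rlsum_div {A} (l : list A) h c : Rlsum l (fun x => h x / c) = Rlsum l h / c.
Proof. induction l; simpl. unfold Rdiv; ring. rewrite IHl. unfold Rdiv; ring. Qed.

Lemma Rlsum_plus {A} (l : list A) h1 h2 : Rlsum l (fun x => h1 x + h2 x) = Rlsum l h1 + Rlsum l h2.
Proof. induction l; simpl. ring. rewrite IHl. ring. Qed.

Lemma Rlsum_cv (l : list nat) (u : nat -> nat -> R) (L : nat -> R) :
  (forall j, In j l -> Un_cv (fun m => u j m) (L j)) ->
  Un_cv (fun m => Rlsum l (fun j => u j m)) (Rlsum l L).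
Proof.
  induction l; simpl; intros H.
  - intros eps He. exists 0%nat. intros. unfold Rdist. rewrite Rminus_0_r, Rabs_R0. lra.
  - apply CV_plus; auto.
Qed.

Lemma cv_const c : Un_cv (fun _ => c) c.
Proof. intros eps He. exists 0%nat. intros. unfold Rdist. rewrite Rminus_diag, Rabs_R0. lra. Qed.

Lemma cv_ext (u v : nat -> R) l : (forall m, u m = v m) -> Un_cv u l -> Un_cv v l.
Proof. intros E H eps He. destruct (H eps He) as [N HN]. exists N. intros. rewrite <- E. auto. Qed.

Lemma cv_coef (c : nat) (g : nat -> R) : ((1 <= c)%nat -> Un_cv g 1) -> Un_cv (fun m => INR c * g m) (INR c).
Proof.
  intros H. destruct c.
  - apply (cv_ext (fun _ => 0)). intros; simpl; ring. apply cv_const.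
  - assert (Hc := CV_mult _ _ _ _ (cv_const (INR (S c))) (H ltac:(lia))). rewrite Rmult_1_r in Hc. exact Hc.
Qed.

Definition ww (D : nat) (r : nat -> nat) : nat := lsum (seq 1 D) (fun j => (j * r j)%nat).

Lemma lsum_rest1 D h h' i : (forall j, j <> i -> h j = h' j) ->
  lsum (seq 1 D) (upd h i 0) = lsum (seq 1 D) (upd h' i 0).
Proof. intros H. apply lsum_ext. intros j _. unfold upd. destruct (Nat.eqb_spec j i); auto. Qed.

Lemma lsum_split2 (l : list nat) h i : NoDup l -> In i l -> In (S i) l ->
  lsum l h = (h i + h (S i) + lsum l (upd (upd h i 0) (S i) 0))%nat.
Proof.
  intros ND H1 H2. rewrite (lsum_factor l h i ND H1), (lsum_factor l (upd h i 0) (S i) ND H2).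
  rewrite upd_neq by lia. lia.
Qed.

Lemma lsum_rest2 D h h' i : (forall j, j <> i -> j <> S i -> h j = h' j) ->
  lsum (seq 1 D) (upd (upd h i 0) (S i) 0) = lsum (seq 1 D) (upd (upd h' i 0) (S i) 0).
Proof. intros H. apply lsum_ext. intros j _. unfold upd. destruct (Nat.eqb_spec j (S i)), (Nat.eqb_spec j i); auto. Qed.

Lemma w_rm1 D r : (1 <= D)%nat -> (1 <= r 1%nat)%nat ->
  (nr D (rm1 r) + 1 = nr D r)%nat /\ (ww D (rm1 r) + 1 = ww D r)%nat.
Proof.
  intros HD H1. unfold nr, ww.
  assert (I1 : In 1%nat (seq 1 D)) by (apply in_seq; lia).
  rewrite (lsum_factor (seq 1 D) (rm1 r) 1%nat (seq_NoDup _ _) I1).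
  rewrite (lsum_factor (seq 1 D) r 1%nat (seq_NoDup _ _) I1).
  rewrite (lsum_factor (seq 1 D) (fun j => (j * rm1 r j)%nat) 1%nat (seq_NoDup _ _) I1).
  rewrite (lsum_factor (seq 1 D) (fun j => (j * r j)%nat) 1%nat (seq_NoDup _ _) I1).
  unfold rm1. rewrite !upd_eq.
  rewrite (lsum_rest1 D (upd r 1 (r 1%nat - 1)) r) by (intros; rewrite upd_neq; auto).
  rewrite (lsum_rest1 D (fun j => j * upd r 1 (r 1%nat - 1) j)%nat (fun j => j * r j)%nat)
    by (intros; rewrite upd_neq; auto).
  split; lia.
Qed.

Lemma w_mvr D r j : (1 <= j)%nat -> (S j <= D)%nat -> (1 <= r (S j))%nat ->
  (nr D (mvr j r) = nr D r)%nat /\ (ww D (mvr j r) + 1 = ww D r)%nat.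
Proof.
  intros H1 H2 H3. unfold nr, ww.
  assert (I1 : In j (seq 1 D)) by (apply in_seq; lia).
  assert (I2 : In (S j) (seq 1 D)) by (apply in_seq; lia).
  rewrite (lsum_split2 (seq 1 D) (mvr j r) j (seq_NoDup _ _) I1 I2).
  rewrite (lsum_split2 (seq 1 D) r j (seq_NoDup _ _) I1 I2).
  rewrite (lsum_split2 (seq 1 D) (fun i => (i * mvr j r i)%nat) j (seq_NoDup _ _) I1 I2).
  rewrite (lsum_split2 (seq 1 D) (fun i => (i * r i)%nat) j (seq_NoDup _ _) I1 I2).
  unfold mvr. rewrite !upd_eq, !(upd_neq _ (S j) _ j) by lia. rewrite !upd_eq.
  rewrite (lsum_rest2 D (upd (upd r j (S (r j))) (S j) (r (S j) - 1)) r)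
    by (intros; rewrite !upd_neq; auto).
  rewrite (lsum_rest2 D (fun i => i * upd (upd r j (S (r j))) (S j) (r (S j) - 1) i)%nat (fun i => i * r i)%nat)
    by (intros; rewrite !upd_neq; auto).
  split; nia.
Qed.

Lemma nr_split D r : (1 <= D)%nat -> nr D r = (r 1%nat + lsum (seq 1 (D - 1)) (fun j => r (S j)))%nat.
Proof.
  intros HD. unfold nr. replace D with (S (D - 1)) at 1 by lia. cbn [seq lsum]. f_equal.
  rewrite <- seq_shift, lsum_map. reflexivity.
Qed.

Lemma lsum_zero (l : list nat) h : lsum l h = 0%nat -> forall j, In j l -> h j = 0%nat.
Proof. induction l; simpl; intros H j Hj; [destruct Hj|]. destruct Hj; subst; [lia|]. apply IHl; auto; lia. Qed.

Lemma lsum_pos (l : list nat) h : lsum l h <> 0%nat -> exists j, In j l /\ h j <> 0%nat.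
Proof. induction l; simpl; intros H; [lia|]. destruct (Nat.eq_dec (h a) 0). destruct IHl as [j [? ?]]; [lia|]. eauto. eauto. Qed.

Lemma FF_nr0 D r x : nr D r = 0%nat -> FF D r x = 1%nat.
Proof.
  intros H. unfold FF. rewrite (lprod_ext _ _ (fun _ => 1%nat)).
  2:{ intros j Hj. rewrite (lsum_zero _ _ H j Hj). reflexivity. }
  clear. induction (seq 1 D); simpl; auto. rewrite IHl. reflexivity.
Qed.

Lemma FF_zero_x D r : nr D r <> 0%nat -> FF D r (fun _ => 0%nat) = 0%nat.
Proof.
  intros H. destruct (lsum_pos _ _ H) as [j [Hj Hr]]. apply in_seq in Hj.
  rewrite (FF_split1 D r _ j) by lia. rewrite ff_zero by lia. lia.
Qed.

Definition f D r m := INR (SS D r m) / INR (fact m).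
Definition bb D r m := INR (r 1%nat) * f D (rm1 r) m
   + Rlsum (seq 1 (D - 1)) (fun j => INR (r (S j)) * f D (mvr j r) m).

Lemma f_rec D r m : (1 <= D)%nat ->
  f D r (S m) = f D r m * (1 - INR (nr D r) / INR (S m)) + bb D r m / INR (S m).
Proof.
  intros HD. pose proof (f_equal INR (SS_rec D r m HD)) as E.
  rewrite !plus_INR, !mult_INR, INR_lsum in E.
  rewrite (Rlsum_ext _ _ (fun j => INR (r (S j)) * INR (SS D (mvr j r) m))) in E
    by (intros; apply mult_INR).
  unfold bb, f.
  rewrite (Rlsum_ext _ _ (fun j => INR (r (S j)) * INR (SS D (mvr j r) m) / INR (fact m)))
    by (intros; unfold Rdiv; ring).
  rewrite Rlsum_div.
  assert (F0 := INR_fact_neq_0 m).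
  assert (S0 : INR (S m) <> 0) by (apply not_0_INR; lia).
  replace (fact (S m)) with (S m * fact m)%nat by reflexivity. rewrite mult_INR.
  set (L := Rlsum (seq 1 (D - 1)) (fun j => INR (r (S j)) * INR (SS D (mvr j r) m))) in *.
  replace (INR (SS D r (S m))) with
    (INR (S m) * INR (SS D r m) + INR (r 1%nat) * INR (SS D (rm1 r) m) + L - INR (nr D r) * INR (SS D r m)) by lra.
  field. auto.
Qed.

Lemma f_nonneg D r m : 0 <= f D r m.
Proof. unfold f. apply Rmult_le_pos. apply pos_INR. apply Rlt_le, Rinv_0_lt_compat, INR_fact_lt_0. Qed.

Lemma XV_nil j : XV [] j = 0%nat.
Proof. reflexivity. Qed.

Lemma f_bound D (HD : (1 <= D)%nat) : forall m r, f D r m <= 1 /\ ((m < nr D r)%nat -> f D r m = 0).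
Proof.
  induction m; intros r.
  - unfold f, SS. simpl rrt. cbn [lsum]. rewrite Nat.add_0_r.
    rewrite (FF_ext D r r (XV []) (fun _ => 0%nat)) by (intros; split; reflexivity).
    destruct (Nat.eq_dec (nr D r) 0) as [E|E].
    + rewrite (FF_nr0 D r _ E). simpl. split; [lra|lia].
    + rewrite FF_zero_x by auto. simpl. split; [lra|auto]. intros; lra.
  - rewrite f_rec by auto.
    assert (Hb : bb D r m <= INR (nr D r)).
    { unfold bb. rewrite (nr_split D r HD), plus_INR, INR_lsum.
      assert (INR (r 1%nat) * f D (rm1 r) m <= INR (r 1%nat)).
      { destruct (IHm (rm1 r)) as [Hq _]. pose proof (f_nonneg D (rm1 r) m). pose proof (pos_INR (r 1%nat)). nra. }
      assert (Rlsum (seq 1 (D - 1)) (fun j => INR (r (S j)) * f D (mvr j r) m) <= Rlsum (seq 1 (D - 1)) (fun j => INR (r (S j)))).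
      { apply Rlsum_le. intros j _. destruct (IHm (mvr j r)) as [Hq _]. pose proof (f_nonneg D (mvr j r) m).
        pose proof (pos_INR (r (S j))). nra. }
      lra. }
    assert (S0 : 0 < INR (S m)) by (apply lt_0_INR; lia).
    destruct (Nat.le_gt_cases (nr D r) (S m)) as [Hle|Hgt].
    + split; [|lia].
      destruct (IHm r) as [H1 _]. pose proof (f_nonneg D r m).
      assert (INR (nr D r) <= INR (S m)) by (apply le_INR; auto).
      assert (0 <= 1 - INR (nr D r) / INR (S m) <= 1).
      { assert (Hq1 : INR (nr D r) / INR (S m) <= 1).
        { apply Rmult_le_reg_r with (INR (S m)); auto. unfold Rdiv. rewrite Rmult_assoc, Rinv_l by lra. lra. }
        assert (0 <= INR (nr D r) / INR (S m)) by (apply Rmult_le_pos; [apply pos_INR| apply Rlt_le, Rinv_0_lt_compat; auto]). lra. }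
      assert (f D r m * (1 - INR (nr D r) / INR (S m)) <= 1 - INR (nr D r) / INR (S m)) by nra.
      assert (bb D r m / INR (S m) <= INR (nr D r) / INR (S m)).
      { unfold Rdiv. apply Rmult_le_compat_r; auto. apply Rlt_le, Rinv_0_lt_compat; auto. }
      lra.
    + assert (Hbz : bb D r m = 0).
      { unfold bb. rewrite (Rlsum_ext _ _ (fun _ => 0)).
        - assert (INR (r 1%nat) * f D (rm1 r) m = 0).
          { destruct (Nat.eq_dec (r 1%nat) 0) as [E|E]. rewrite E; simpl; ring.
            destruct (w_rm1 D r HD) as [W _]; [lia|]. rewrite (proj2 (IHm (rm1 r))) by lia. ring. }
          rewrite H. clear. induction (seq 1 (D - 1)); simpl; lra.
        - intros j Hj. apply in_seq in Hj. destruct (Nat.eq_dec (r (S j)) 0) as [E|E]. rewrite E; simpl; ring.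
          destruct (w_mvr D r j) as [W _]; try lia. rewrite (proj2 (IHm (mvr j r))) by lia. ring. }
      rewrite Hbz, (proj2 (IHm r)) by lia. split; intros; lra.
Qed.

Lemma f_cv D (HD : (1 <= D)%nat) : forall r, Un_cv (f D r) 1.
Proof.
  assert (forall W r, (ww D r <= W)%nat -> Un_cv (f D r) 1); [|eauto].
  induction W; intros r Hw.
  all: destruct (Nat.eq_dec (nr D r) 0) as [E|E];
    [ apply (cv_ext (fun _ => 1)); [|apply cv_const]; intros m; unfold f, SS;
      rewrite (lsum_ext _ _ (fun _ => 1%nat)) by (intros; apply FF_nr0; auto);
      rewrite lsum_const, rrt_length, Nat.mul_1_l; field; apply INR_fact_neq_0 | ].
  - exfalso. destruct (lsum_pos _ _ E) as [j [Hj Hr]].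
    unfold ww in Hw. assert (H : lsum (seq 1 D) (fun j => (j * r j)%nat) = 0%nat) by lia.
    pose proof (lsum_zero _ _ H j Hj) as H0. apply in_seq in Hj. simpl in H0. nia.
  - apply (lim_rec (f D r) (bb D r) (nr D r)); [lia| intros; apply f_rec; auto |].
    unfold bb. rewrite (nr_split D r HD), plus_INR, INR_lsum.
    apply CV_plus.
    + apply cv_coef. intros H1. apply IHW. destruct (w_rm1 D r HD H1). lia.
    + apply (Rlsum_cv (seq 1 (D - 1)) (fun j m => INR (r (S j)) * f D (mvr j r) m)).
      intros j Hj. apply in_seq in Hj. apply cv_coef. intros H1. apply IHW.
      destruct (w_mvr D r j); lia.
Qed.


Lemma Rlsum_app {A} (l1 l2 : list A) h : Rlsum (l1 ++ l2) h = Rlsum l1 h + Rlsum l2 h.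
Proof. induction l1; simpl. ring. rewrite IHl1. ring. Qed.

Lemma Rlsum_map {A B} (l : list A) (f : A -> B) h : Rlsum (map f l) h = Rlsum l (fun x => h (f x)).
Proof. induction l; simpl; auto. rewrite IHl. reflexivity. Qed.

Lemma Rlsum_mult_l {A} (l : list A) h c : Rlsum l (fun x => c * h x) = c * Rlsum l h.
Proof. induction l; simpl. ring. rewrite IHl. ring. Qed.

Lemma Rlsum_opp {A} (l : list A) h : Rlsum l (fun x => - h x) = - Rlsum l h.
Proof. induction l; simpl. ring. rewrite IHl. ring. Qed.

Lemma Rlsum_swap {A B} (l1 : list A) (l2 : list B) (h : A -> B -> R) :
  Rlsum l1 (fun x => Rlsum l2 (h x)) = Rlsum l2 (fun y => Rlsum l1 (fun x => h x y)).
Proof. induction l1; simpl. induction l2; simpl; lra.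
  rewrite IHl1, <- Rlsum_plus. reflexivity. Qed.

Lemma Rlsum_zero {A} (l : list A) h : (forall x, In x l -> h x = 0) -> Rlsum l h = 0.
Proof. intros H. rewrite (Rlsum_ext _ _ (fun _ => 0)) by auto. clear. induction l; simpl; lra. Qed.

Definition AA (s : R) (x v : nat) : R :=
  if x <=? v then s ^ (v - x) / (INR (fact x) * INR (fact (v - x))) else 0.

Definition AAp (x v : nat) : R := match x with O => 0 | S x' => AA (-1) x' v end.

Lemma fact_S_INR n : INR (fact (S n)) = INR (S n) * INR (fact n).
Proof. rewrite <- mult_INR. reflexivity. Qed.

Lemma AA_rec x u : INR (S u) * AA (-1) x (S u) = - AA (-1) x u + AAp x u.
Proof.
  unfold AAp, AA. assert (F := INR_fact_neq_0).
  destruct (Nat.leb_spec x (S u)), (Nat.leb_spec x u).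
  - destruct x as [|x'].
    + rewrite !Nat.sub_0_r. replace (S u) with (S u) by reflexivity.
      change ((-1) ^ S u) with (-1 * (-1) ^ u). rewrite fact_S_INR.
      assert (INR (S u) <> 0) by (apply not_0_INR; lia). field. split; auto.
    + destruct (Nat.leb_spec x' u); [|lia].
      replace (S u - S x')%nat with (u - x')%nat by lia.
      replace (u - x')%nat with (S (u - S x')) by lia.
      set (w := (u - S x')%nat). assert (Hu : u = (w + S x')%nat) by lia.
      change ((-1) ^ S w) with (-1 * (-1) ^ w).
      rewrite !fact_S_INR. rewrite Hu, !S_INR, plus_INR, S_INR.
      assert (INR w + 1 <> 0) by (pose proof (pos_INR w); lra).
      assert (INR x' + 1 <> 0) by (pose proof (pos_INR x'); lra).
      field. repeat split; auto.
  - assert (x = S u) by lia. subst x. rewrite Nat.sub_diag. simpl pow.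
    destruct (Nat.leb_spec u u); [|lia]. rewrite Nat.sub_diag.
    rewrite fact_S_INR. assert (INR (S u) <> 0) by (apply not_0_INR; lia). field. split; auto.
  - lia.
  - destruct x as [|x']; [lia|]. destruct (Nat.leb_spec x' u); [lia|]. ring.
Qed.

Definition II (M X x : nat) : R := Rlsum (seq 0 M) (fun v => AA (-1) x v * INR (ff X v)).

Lemma II_ext M X x : (S X <= M)%nat -> II M X x = II (S X) X x.
Proof.
  intros H. unfold II. replace M with (S X + (M - S X))%nat at 1 by lia.
  rewrite seq_app, Rlsum_app. rewrite (Rlsum_zero (seq (0 + S X) _)). ring.
  intros v Hv. apply in_seq in Hv. rewrite ff_zero by lia. simpl. ring.
Qed.

Lemma seq0_S M : seq 0 (S M) = 0%nat :: map S (seq 0 M).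
Proof. simpl. rewrite seq_shift. reflexivity. Qed.

Lemma II_val X : forall M x, (S X <= M)%nat -> II M X x = if (X =? x)%nat then 1 else 0.
Proof.
  induction X; intros M x HM.
  - rewrite II_ext by auto. unfold II. simpl. unfold AA.
    destruct x; simpl; [field|ring].
  - unfold II.
    rewrite (Rlsum_ext _ _ (fun v => AA (-1) x v * INR (ff X v) + INR v * AA (-1) x v * INR (ff X (v - 1)))).
    2:{ intros v _. rewrite ff_Sx, plus_INR, mult_INR. ring. }
    rewrite Rlsum_plus. fold (II M X x). rewrite IHX by lia.
    destruct M as [|M]; [lia|]. rewrite seq0_S. cbn [Rlsum]. rewrite Rlsum_map.
    rewrite (Rlsum_ext _ _ (fun u => - (AA (-1) x u * INR (ff X u)) + AAp x u * INR (ff X u))).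
    2:{ intros u _. replace (S u - 1)%nat with u by lia. rewrite AA_rec. ring. }
    rewrite Rlsum_plus, Rlsum_opp. fold (II M X x). rewrite IHX by lia.
    destruct x as [|x'].
    + unfold AAp. rewrite Rlsum_zero by (intros; ring). simpl. destruct (X =? 0)%nat; lra.
    + unfold AAp. fold (II M X x'). rewrite IHX by lia. simpl.
      destruct (Nat.eqb_spec X (S x')), (Nat.eqb_spec X x'); lia || lra.
Qed.

Definition alpha (k v : nat) : R := Rlsum (seq 0 (S k)) (fun x => AA (-1) x v).

Lemma alpha_id k X M : (S X <= M)%nat ->
  Rlsum (seq 0 M) (fun v => alpha k v * INR (ff X v)) = if (X <=? k)%nat then 1 else 0.
Proof.
  intros H. unfold alpha.
  rewrite (Rlsum_ext _ _ (fun v => Rlsum (seq 0 (S k)) (fun x => AA (-1) x v * INR (ff X v)))).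
  2:{ intros v _. rewrite (Rlsum_ext _ (fun x => AA (-1) x v * INR (ff X v)) (fun x => INR (ff X v) * AA (-1) x v)) by (intros; ring).
      rewrite Rlsum_mult_l. ring. }
  rewrite Rlsum_swap. rewrite (Rlsum_ext _ _ (fun x => INR (if (x =? X)%nat then 1%nat else 0%nat))).
  2:{ intros x _. fold (II M X x). rewrite II_val by auto. rewrite Nat.eqb_sym. destruct (x =? X)%nat; reflexivity. }
  rewrite <- INR_lsum. rewrite (lsum_seq_ind (fun _ => 1%nat)).
  destruct (Nat.leb_spec X k), (Nat.leb_spec 0 X), (Nat.ltb_spec X (0 + S k)); simpl; auto; lia.
Qed.


Lemma seq_add a n : seq a n = map (Nat.add a) (seq 0 n).
Proof. induction n. reflexivity. rewrite !seq_S, map_app, IHn. simpl. reflexivity. Qed.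

Lemma Rlsum_sum_f (h : nat -> R) n : Rlsum (seq 0 (S n)) h = sum_f_R0 h n.
Proof. induction n. simpl. ring. rewrite seq_S, Rlsum_app, IHn. simpl. ring. Qed.

Lemma exp_partial (s : R) : Un_cv (fun n => Rlsum (seq 0 n) (fun i => s ^ i / INR (fact i))) (exp s).
Proof.
  intros eps He. unfold exp. destruct (exist_exp s) as [l Hl]. simpl.
  destruct (Hl eps He) as [N HN]. exists (S N). intros n Hn.
  destruct n as [|n]; [lia|]. rewrite Rlsum_sum_f.
  rewrite (sum_eq _ (fun i => / INR (fact i) * s ^ i)) by (intros; unfold Rdiv; ring).
  apply HN. lia.
Qed.

Lemma cv_shift (w : nat -> R) (u : nat -> R) (x : nat) (c L : R) :
  (forall M, (x <= M)%nat -> u M = c * w (M - x)%nat) -> Un_cv w L -> Un_cv u (c * L).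
Proof.
  intros Hu Hw. assert (H := CV_mult _ _ _ _ (cv_const c) Hw).
  intros eps He. destruct (H eps He) as [N HN]. exists (N + x)%nat. intros n Hn.
  rewrite Hu by lia. apply (HN (n - x)%nat). lia.
Qed.

Lemma AA_partial (s : R) x :
  Un_cv (fun M => Rlsum (seq 0 M) (fun v => AA s x v)) (/ INR (fact x) * exp s).
Proof.
  apply (cv_shift (fun n => Rlsum (seq 0 n) (fun i => s ^ i / INR (fact i))) _ x); [|apply exp_partial].
  intros M HM. replace M with (x + (M - x))%nat at 1 by lia. rewrite seq_app, Rlsum_app.
  rewrite Rlsum_zero. 2:{ intros v Hv. apply in_seq in Hv. unfold AA. destruct (Nat.leb_spec x v); [lia|reflexivity]. }
  rewrite Rplus_0_l, seq_add, Rlsum_map, <- Rlsum_mult_l. apply Rlsum_ext. intros i _.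
  unfold AA. rewrite Nat.add_0_l. destruct (Nat.leb_spec x (x + i)); [|lia].
  replace (x + i - x)%nat with i by lia. field. split; apply INR_fact_neq_0.
Qed.

Definition beta (k v : nat) : R := Rlsum (seq 0 (S k)) (fun x => AA 1 x v).

Lemma sum_partial (s : R) k :
  Un_cv (fun M => Rlsum (seq 0 M) (fun v => Rlsum (seq 0 (S k)) (fun x => AA s x v)))
        (Rlsum (seq 0 (S k)) (fun x => / INR (fact x) * exp s)).
Proof.
  apply (cv_ext (fun M => Rlsum (seq 0 (S k)) (fun x => Rlsum (seq 0 M) (fun v => AA s x v)))).
  { intros M. rewrite Rlsum_swap. reflexivity. }
  apply (Rlsum_cv _ (fun x M => Rlsum (seq 0 M) (fun v => AA s x v))). intros. apply AA_partial.
Qed.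

Lemma alpha_partial k : Un_cv (fun M => Rlsum (seq 0 M) (alpha k)) (poisson1_cdf k).
Proof.
  unfold poisson1_cdf. rewrite <- Rlsum_sum_f.
  rewrite (Rlsum_ext _ _ (fun x => / INR (fact x) * exp (-1))) by (intros; unfold Rdiv; ring).
  apply sum_partial.
Qed.

Lemma Rabs_Rlsum {A} (l : list A) h : Rabs (Rlsum l h) <= Rlsum l (fun x => Rabs (h x)).
Proof. induction l; simpl. rewrite Rabs_R0. lra. eapply Rle_trans; [apply Rabs_triang|]. lra. Qed.

Lemma alpha_beta k v : Rabs (alpha k v) <= beta k v.
Proof.
  unfold alpha, beta. eapply Rle_trans; [apply Rabs_Rlsum|]. apply Rlsum_le. intros x _.
  unfold AA. destruct (x <=? v)%nat; [|rewrite Rabs_R0; lra].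
  unfold Rdiv. rewrite Rabs_mult, pow_1_abs, pow1. rewrite Rabs_right. lra.
  apply Rle_ge, Rlt_le, Rinv_0_lt_compat. apply Rmult_lt_0_compat; apply INR_fact_lt_0.
Qed.

Lemma beta_partial k : exists B, Un_cv (fun M => Rlsum (seq 0 M) (beta k)) B.
Proof. eexists. apply sum_partial. Qed.

Lemma beta_nonneg k v : 0 <= beta k v.
Proof.
  unfold beta. rewrite <- (Rlsum_zero (seq 0 (S k)) (fun _ => 0)) by auto. apply Rlsum_le. intros x _.
  unfold AA. destruct (x <=? v)%nat; [|lra]. rewrite pow1. unfold Rdiv. rewrite Rmult_1_l.
  apply Rlt_le, Rinv_0_lt_compat. apply Rmult_lt_0_compat; apply INR_fact_lt_0.
Qed.


Lemma seq_split0 V M : (V <= M)%nat -> seq 0 M = seq 0 V ++ seq V (M - V).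
Proof. intros H. replace M with (V + (M - V))%nat at 1 by lia. rewrite seq_app. reflexivity. Qed.

Lemma tannery (al be : nat -> R) (Sa Bb l : R) (u : nat -> nat -> R) (Mn : nat -> nat) :
  (forall v, Rabs (al v) <= be v) ->
  Un_cv (fun M => Rlsum (seq 0 M) be) Bb ->
  Un_cv (fun M => Rlsum (seq 0 M) al) Sa ->
  (forall n v, Rabs (u n v) <= 1) ->
  (forall v, Un_cv (fun n => u n v) l) -> Rabs l <= 1 ->
  (forall n, (n <= Mn n)%nat) ->
  Un_cv (fun n => Rlsum (seq 0 (Mn n)) (fun v => al v * u n v)) (Sa * l).
Proof.
  intros Hab Hb Ha Hu Hul Hl HM eps Heps.
  set (e := eps / 4).
  destruct (Hb (e / 2)) as [V HV]; [unfold e; lra|].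
  assert (Htail : forall M, (V <= M)%nat -> Rlsum (seq V (M - V)) be < e).
  { intros M HMV. assert (E := seq_split0 V M HMV).
    pose proof (HV M HMV) as H1. pose proof (HV V (le_n V)) as H2.
    unfold Rdist in H1, H2. rewrite E, Rlsum_app in H1.
    apply Rabs_def2 in H1. apply Rabs_def2 in H2. lra. }
  assert (Htail' : forall M (g : nat -> R), (V <= M)%nat -> (forall v, Rabs (g v) <= be v) ->
     Rabs (Rlsum (seq V (M - V)) g) < e).
  { intros M g HMV Hg. eapply Rle_lt_trans; [apply Rabs_Rlsum|].
    eapply Rle_lt_trans; [|apply (Htail M HMV)]. apply Rlsum_le. auto. }
  assert (HSa : Rabs (Sa - Rlsum (seq 0 V) al) <= 2 * e).
  { destruct (Ha e) as [N1 HN1]; [unfold e; lra|].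
    set (M := Nat.max N1 V). pose proof (HN1 M ltac:(lia)) as H1. unfold Rdist in H1.
    rewrite (seq_split0 V M) in H1 by lia. rewrite Rlsum_app in H1.
    pose proof (Htail' M al ltac:(lia) Hab) as H2.
    apply Rabs_def2 in H1. apply Rabs_def2 in H2.
    apply Rabs_le. lra. }
  assert (Hfin : Un_cv (fun n => Rlsum (seq 0 V) (fun v => al v * u n v)) (Rlsum (seq 0 V) (fun v => al v * l))).
  { apply (Rlsum_cv _ (fun v n => al v * u n v)). intros v _. apply CV_mult. apply cv_const. auto. }
  destruct (Hfin e) as [N0 HN0]; [unfold e; lra|].
  exists (Nat.max N0 V). intros n Hn. unfold Rdist.
  rewrite (seq_split0 V (Mn n)) by (specialize (HM n); lia). rewrite Rlsum_app.
  pose proof (HN0 n ltac:(lia)) as H1. unfold Rdist in H1.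
  assert (H2 : Rabs (Rlsum (seq V (Mn n - V)) (fun v => al v * u n v)) < e).
  { apply Htail'. specialize (HM n); lia. intros v. rewrite Rabs_mult.
    specialize (Hu n v). specialize (Hab v). pose proof (Rabs_pos (al v)). nra. }
  assert (E : Rlsum (seq 0 V) (fun v => al v * l) = Rlsum (seq 0 V) al * l).
  { rewrite (Rlsum_ext _ _ (fun v => l * al v)) by (intros; ring). rewrite Rlsum_mult_l. ring. }
  rewrite E in H1.
  assert (H3 : Rabs ((Rlsum (seq 0 V) al - Sa) * l) <= 2 * e).
  { rewrite Rabs_mult. rewrite Rabs_minus_sym. pose proof (Rabs_pos l). pose proof (Rabs_pos (Sa - Rlsum (seq 0 V) al)). nra. }
  replace (Rlsum (seq 0 V) (fun v => al v * u n v) + Rlsum (seq V (Mn n - V)) (fun v => al v * u n v) - Sa * l)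
    with ((Rlsum (seq 0 V) (fun v => al v * u n v) - Rlsum (seq 0 V) al * l)
          + Rlsum (seq V (Mn n - V)) (fun v => al v * u n v) + (Rlsum (seq 0 V) al - Sa) * l) by ring.
  eapply Rle_lt_trans; [apply Rabs_triang|].
  eapply Rle_lt_trans; [apply Rplus_le_compat_r, Rabs_triang|].
  unfold e in *. lra.
Qed.


Fixpoint Rlprod {A} (l : list A) (h : A -> R) : R :=
  match l with [] => 1 | x :: l' => h x * Rlprod l' h end.

Definition ind (k : nat -> nat) (t : list nat) (c : nat) : R := if (Xlev t c <=? k c)%nat then 1 else 0.

Definition Q D k cs r n := Rlsum (rrt n) (fun t => INR (FF D r (XV t)) * Rlprod cs (ind k t)) / INR (fact n).

Lemma Rlprod_ind k t cs : 0 <= Rlprod cs (ind k t) <= 1.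
Proof. induction cs; simpl. lra. assert (ind k t a = 0 \/ ind k t a = 1) as [E|E] by (unfold ind; destruct (Xlev t a <=? k a)%nat; auto); rewrite E; destruct IHcs; split; lra. Qed.

Lemma Q_bound D k cs r n : (1 <= D)%nat -> Rabs (Q D k cs r n) <= 1.
Proof.
  intros HD. assert (H0 : 0 <= Q D k cs r n <= f D r n).
  { unfold Q, f, SS. rewrite INR_lsum. unfold Rdiv. pose proof (INR_fact_lt_0 n).
    assert (0 < / INR (fact n)) by (apply Rinv_0_lt_compat; auto).
    split.
    - apply Rmult_le_pos; [|lra]. rewrite <- (Rlsum_zero (rrt n) (fun _ => 0)) by auto.
      apply Rlsum_le. intros t _. pose proof (Rlprod_ind k t cs). pose proof (pos_INR (FF D r (XV t))). nra.
    - apply Rmult_le_compat_r; [lra|]. apply Rlsum_le. intros t _.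
      pose proof (Rlprod_ind k t cs). pose proof (pos_INR (FF D r (XV t))). nra. }
  destruct (f_bound D HD n r). rewrite Rabs_right; lra.
Qed.

Lemma Q_nil D k r n : Q D k [] r n = f D r n.
Proof. unfold Q, f, SS. rewrite INR_lsum. f_equal. apply Rlsum_ext. intros; simpl; ring. Qed.

Lemma Xlev_le t j : (Xlev t j <= S (length t))%nat.
Proof. unfold Xlev. eapply Nat.le_trans; [apply filter_length_le|]. rewrite length_seq. lia. Qed.

Lemma FF_updc D r x c v : (1 <= c <= D)%nat -> r c = 0%nat -> FF D (upd r c v) x = (ff (x c) v * FF D r x)%nat.
Proof.
  intros Hc Hr. rewrite !(FF_split1 D _ x c) by lia. rewrite upd_eq, Hr.
  rewrite (rest_ext1 D (hF (upd r c v) x) (hF r x)) by (intros; unfold hF; rewrite upd_neq; auto).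
  simpl. lia.
Qed.

Lemma Q_step D k c cs r n : (1 <= c <= D)%nat -> r c = 0%nat ->
  Q D k (c :: cs) r n = Rlsum (seq 0 (S (S n))) (fun v => alpha (k c) v * Q D k cs (upd r c v) n).
Proof.
  intros Hc Hr. unfold Q.
  rewrite (Rlsum_ext _ _ (fun v => Rlsum (rrt n) (fun t => alpha (k c) v * (INR (FF D (upd r c v) (XV t)) * Rlprod cs (ind k t))) / INR (fact n))).
  2:{ intros v _. rewrite Rlsum_mult_l. unfold Rdiv; ring. }
  rewrite Rlsum_div, Rlsum_swap. f_equal. apply Rlsum_ext. intros t Ht.
  simpl Rlprod. unfold ind at 1.
  destruct (rrt_spec _ _ Ht) as [Lt _].
  rewrite <- (alpha_id (k c) (Xlev t c) (S (S n))) by (pose proof (Xlev_le t c); lia).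
  rewrite (Rlsum_ext _ (fun v => alpha (k c) v * (INR (FF D (upd r c v) (XV t)) * Rlprod cs (ind k t)))
     (fun v => (INR (FF D r (XV t)) * Rlprod cs (ind k t)) * (alpha (k c) v * INR (ff (Xlev t c) v)))).
  2:{ intros v _. rewrite FF_updc by auto. rewrite mult_INR. unfold XV at 1. ring. }
  rewrite Rlsum_mult_l. ring.
Qed.

Lemma lim_le1 (w : nat -> R) l : Un_cv w l -> (forall n, Rabs (w n) <= 1) -> Rabs l <= 1.
Proof.
  intros H Hb. destruct (Rle_lt_dec (Rabs l) 1) as [|Hlt]; auto.
  destruct (H (Rabs l - 1)) as [N HN]; [lra|]. specialize (HN N (le_n N)). unfold Rdist in HN.
  specialize (Hb N). pose proof (Rabs_triang_inv l (w N)). rewrite Rabs_minus_sym in HN. lra.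
Qed.

Lemma Q_cv D k (HD : (1 <= D)%nat) : forall cs, NoDup cs -> (forall c, In c cs -> (1 <= c <= D)%nat) ->
  forall r, (forall c, In c cs -> r c = 0%nat) -> Un_cv (Q D k cs r) (Rlprod cs (fun c => poisson1_cdf (k c))).
Proof.
  induction cs as [|c cs IH]; intros ND Hcs r Hr.
  - simpl. apply (cv_ext (f D r)). intros; rewrite Q_nil; auto. apply f_cv; auto.
  - inversion ND; subst.
    apply (cv_ext (fun n => Rlsum (seq 0 (S (S n))) (fun v => alpha (k c) v * Q D k cs (upd r c v) n))).
    { intros n. rewrite Q_step; auto. apply Hcs; left; auto. apply Hr; left; auto. }
    destruct (beta_partial (k c)) as [B HB].
    simpl Rlprod.
    assert (IHv : forall v, Un_cv (fun n => Q D k cs (upd r c v) n) (Rlprod cs (fun c => poisson1_cdf (k c)))).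
    { intros v. apply IH; auto. intros; apply Hcs; right; auto.
      intros c' Hc'. rewrite upd_neq. apply Hr; right; auto. intros ->. contradiction. }
    apply (tannery (alpha (k c)) (beta (k c)) _ B _ (fun n v => Q D k cs (upd r c v) n) (fun n => S (S n))); auto.
    + apply alpha_beta.
    + apply alpha_partial.
    + intros; apply Q_bound; auto.
    + apply (lim_le1 _ _ (IHv 0%nat)). intros; apply Q_bound; auto.
Qed.

Lemma forallb_prod (l : list nat) (P : nat -> bool) :
  INR (if forallb P l then 1%nat else 0%nat) = Rlprod l (fun i => if P i then 1 else 0).
Proof. induction l; simpl; auto. destruct (P a); simpl; [rewrite <- IHl; ring|ring]. Qed.

Lemma Rlprod_fold (l : list nat) h : Rlprod l h = fold_right Rmult 1 (map h l).
Proof. induction l; simpl; auto. rewrite IHl; auto. Qed.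

Theorem theorem3p1 :
  forall d : nat, (1 <= d)%nat ->
  forall k : nat -> nat,
    Un_cv
      (fun n => prob n (fun t => forallb (fun i => Nat.leb (Xlev t i) (k i)) (seq 1 d)))
      (fold_right Rmult 1 (map (fun i => poisson1_cdf (k i)) (seq 1 d))).
Proof.
  intros d Hd k. rewrite <- Rlprod_fold.
  apply (cv_ext (Q d k (seq 1 d) (fun _ => 0%nat))).
  2:{ apply Q_cv; auto. apply seq_NoDup. intros c Hc; apply in_seq in Hc; lia. }
  intros n. unfold Q, prob. rewrite rrt_length, length_filter_lsum, INR_lsum. f_equal.
  apply Rlsum_ext. intros t _. rewrite FF_nr0.
  2:{ unfold nr. rewrite lsum_const. lia. }
  rewrite forallb_prod. simpl INR. rewrite Rmult_1_l. reflexivity.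
Qed.
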